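(* Let $C = c_0c_1\dots c_{m-1}c_0$ and $D=(0)(1)\dots(n-1)(0)$ be reflexive digraph cycles with $D$ non-contractible. From any homomorphism $\phi \in \mathrm{Hom}(C,D)$ there is a path of up edges in $\mathrm{Hom}(C,D)$ to a monotone homomorphism.
   Context: A digraph is a binary relation $\to$ on a finite vertex set; reflexive means every vertex has a loop $uu$. A digraph cycle $C=c_0c_1\dots c_{m-1}c_0$ (indices mod $m$, $m\ge 3$) has underlying graph the cycle with edges $c_ic_{i+1}$; $D=(0)(1)\dots(n-1)(0)$ has vertex set the integers mod $n$. $D$ is non-contractible if it has length at least $4$ or is a directed $3$-cycle. A homomorphism $\phi: C\to D$ satisfies $u\to v\Rightarrow\phi(u)\to\phi(v)$. $\mathrm{Hom}(C,D)$ is the digraph on homomorphisms with $\phi\to\phi'$ iff $\phi(u)\to\phi'(v)$ for every arc $u\to v$ of $C$; adjacency means $\phi\to\phi'$ or $\phi'\to\phi$. For adjacent $\phi,\phi'$, a vertex $c$ moves up if $\phi'(c)=\phi(c)+1$, moves down if $\phi'(c)=\phi(c)-1$; $(\phi,\phi')$ is an up edge if they are adjacent and every vertex that moves, moves up; a path of up edges from $\phi$ to $\phi'$ is a sequence $\phi=\phi_0,\dots,\phi_k=\phi'$ of up edges $(\phi_j,\phi_{j+1})$. Under $\phi$, edge $c_ic_{i+1}$ is increasing, stationary or decreasing as $\phi(c_{i+1})-\phi(c_i)$ is $1,0,-1$ (mod $n$). A homomorphism is monotone if either every edge is increasing or stationary, or every edge is decreasing or stationary (in particular constant maps are monotone).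 *)

(* Defs.v *)
From mathcomp Require Import all_boot.
Set Implicit Arguments. Unset Strict Implicit. Unset Printing Implicit Defensive.

(* A digraph on vertex set 'I_k is a relation a : rel 'I_k (a u v means u -> v).
   Vertex i : 'I_k of a cycle stands for c_i; ordS i is c_{i+1} (indices mod k). *)

Definition refl_digraph_cycle (k : nat) (a : rel 'I_k) : Prop :=
  [/\ 3 <= k,
      (forall u, a u u),
      (forall i, a i (ordS i) || a (ordS i) i) &
      (forall u v, a u v -> [\/ u = v, v = ordS u | u = ordS v])].

Definition directed_3cycle (k : nat) (a : rel 'I_k) : Prop :=
  k = 3 /\
  ((forall i, a i (ordS i) && ~~ a (ordS i) i) \/
   (forall i, a (ordS i) i && ~~ a i (ordS i))).

Definition non_contractible (k : nat) (a : rel 'I_k) : Prop :=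
  4 <= k \/ directed_3cycle a.

Section Hom.
Variables (m n : nat) (C : rel 'I_m) (D : rel 'I_n).

Definition is_hom (phi : {ffun 'I_m -> 'I_n}) : Prop :=
  forall u v, C u v -> D (phi u) (phi v).

Definition hom_arc (phi phi' : {ffun 'I_m -> 'I_n}) : Prop :=
  forall u v, C u v -> D (phi u) (phi' v).

Definition hom_adjacent (phi phi' : {ffun 'I_m -> 'I_n}) : Prop :=
  hom_arc phi phi' \/ hom_arc phi' phi.

Definition up_edge (phi phi' : {ffun 'I_m -> 'I_n}) : Prop :=
  [/\ is_hom phi, is_hom phi', hom_adjacent phi phi' &
      forall c, phi' c != phi c -> phi' c = ordS (phi c)].

Fixpoint up_path (phi : {ffun 'I_m -> 'I_n}) (s : seq {ffun 'I_m -> 'I_n}) : Prop :=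
  match s with
  | [::] => True
  | psi :: s' => up_edge phi psi /\ up_path psi s'
  end.

Definition monotone (phi : {ffun 'I_m -> 'I_n}) : Prop :=
  (forall i, phi (ordS i) = phi i \/ phi (ordS i) = ordS (phi i)) \/
  (forall i, phi (ordS i) = phi i \/ phi (ordS i) = ord_pred (phi i)).

End Hom.

(* Main.v *)
Require Import Defs.
From mathcomp Require Import all_boot.
From Stdlib Require Import Classical.

Section Pf.
Variables (m n : nat) (C : rel 'I_m) (D : rel 'I_n).
Hypotheses (HC : refl_digraph_cycle C) (HD : refl_digraph_cycle D).

Definition cnt (phi : {ffun 'I_m -> 'I_n}) :=
  #|[pred i : 'I_m | phi (ordS i) != phi i]|.

Lemma n3 : 3 <= n. Proof. by case: HD. Qed.

Lemma ordS_neq (a : 'I_n) : ordS a != a.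
Proof.
apply/eqP => /(congr1 val) /=. have := n3; have := ltn_ord a.
move: (nat_of_ord a) => x hx h3.
case: (ltnP x.+1 n) => h.
  by rewrite modn_small // => /eqP; rewrite (gtn_eqF (ltnSn x)).
have nx : x.+1 = n by apply/eqP; rewrite eqn_leq hx h.
rewrite nx modnn => e. by move: h3; rewrite -nx -e.
Qed.

Lemma ordSS_neq (a : 'I_n) : ordS a != ord_pred a.
Proof.
apply/negP => /eqP h. have : ordS (ordS a) = a by rewrite h ord_predK.
move/(congr1 val) => /=. have := n3; have := ltn_ord a.
move: (nat_of_ord a) => x hx h3.
case: (ltnP x.+1 n) => h0.
  rewrite (modn_small h0).
  case: (ltnP x.+2 n) => h'.
    by rewrite modn_small // => /eqP; rewrite (gtn_eqF (ltnW (ltnSn x.+1))) //; rewrite ltnS.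
  have e : x.+2 = n by apply/eqP; rewrite eqn_leq h0 h'.
  rewrite e modnn => e0. by move: h3; rewrite -e -e0.
have e : x.+1 = n by apply/eqP; rewrite eqn_leq hx h0.
rewrite e modnn modn_small; last by apply: leq_trans h3.
move=> e1. by move: h3; rewrite -e -e1.
Qed.

Lemma ord_pred_neq (a : 'I_n) : ord_pred a != a.
Proof.
apply/eqP => e. have := ordS_neq a. by rewrite -{1}e ord_predK eqxx.
Qed.

Lemma step phi : is_hom C D phi -> forall i,
  [\/ phi (ordS i) = phi i, phi (ordS i) = ordS (phi i) |
      phi (ordS i) = ord_pred (phi i)].
Proof.
move=> hphi i. case: HC => _ _ HCe _. case: HD => _ _ _ Drel.
case/orP: (HCe i) => /hphi /Drel [e|e|e].
- by constructor 1.
- by constructor 2.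
- by constructor 3; rewrite e ordSK.
- by constructor 1.
- by constructor 3; rewrite e ordSK.
- by constructor 2.
Qed.

Lemma raise phi : is_hom C D phi -> ~ monotone phi ->
  exists phi', up_edge C D phi phi' /\ cnt phi' < cnt phi.
Proof.
move=> hphi nmon.
have st := @step phi hphi.
case: HC => m3 Cref HCe Crel. case: HD => _ Dref HDe Drel.
have [i0 dec0] : exists i, phi (ordS i) = ord_pred (phi i).
  case: (boolP [forall i, (phi (ordS i) == phi i) || (phi (ordS i) == ordS (phi i))]) => [/forallP h|].
  - exfalso; apply: nmon; left => i; have := h i; case/orP => /eqP ->; by [left|right].
  - rewrite negb_forall => /existsP [i]; rewrite negb_or => /andP [/eqP h1 /eqP h2].
    by exists i; case: (st i).
have [j incj] : exists j, phi (ordS j) = ordS (phi j).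
  case: (boolP [forall i, (phi (ordS i) == phi i) || (phi (ordS i) == ord_pred (phi i))]) => [/forallP h|].
  - exfalso; apply: nmon; right => i; have := h i; case/orP => /eqP ->; by [left|right].
  - rewrite negb_forall => /existsP [i]; rewrite negb_or => /andP [/eqP h1 /eqP h2].
    by exists i; case: (st i).
pose w := fun u => iter u (@ordS m) i0.
have m_gt0 : 0 < m by apply: leq_trans m3.
have val_w u : val (w u) = (i0 + u) %% m.
  elim: u => [|u IH]; first by rewrite addn0 modn_small.
  change ((w u).+1 %% m = (i0 + u.+1) %% m).
  by rewrite IH -addn1 modnDml addn1 addnS.
have w_inj u v : u < m -> v < m -> w u = w v -> u = v.
  move=> hu hv /(congr1 val); rewrite !val_w => /eqP.
  by rewrite eqn_modDl !modn_small // => /eqP.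
have [t0 [t0m inct0]] : exists t, t < m /\ phi (ordS (w t)) = ordS (phi (w t)).
  exists ((j + (m - i0)) %% m); split; first by rewrite ltn_pmod.
  suff -> : w ((j + (m - i0)) %% m) = j by [].
  apply: val_inj; rewrite val_w modnDmr.
  have -> : i0 + (j + (m - i0)) = j + m.
    by rewrite addnCA subnKC //; exact: ltnW (ltn_ord i0).
  by rewrite modnDr modn_small.
pose P t := phi (ordS (w t)) == ordS (phi (w t)).
have exP : exists t, P t by exists t0; apply/eqP.
case: (ex_minnP exP) => t Pt tmin.
have tm : t < m := leq_ltn_trans (tmin _ (introT eqP inct0)) t0m.
have t_pos : 0 < t.
  case: t Pt {tmin tm} => // /eqP e. have := ordSS_neq (phi i0).
  by rewrite -e -dec0 eqxx.
pose Q u := (u < t) && (phi (ordS (w u)) == ord_pred (phi (w u))).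
have exQ : exists u, Q u by exists 0; rewrite /Q t_pos /= dec0 eqxx.
have Qbound : forall u, Q u -> u <= t by move=> u /andP [/ltnW].
case: (ex_maxnP exQ Qbound) => t' /andP [t't /eqP dect'] t'max.
pose k := phi (w t'.+1).
have mid u : t' < u < t -> phi (ordS (w u)) = phi (w u).
  move=> /andP [h1 h2]. case: (st (w u)) => // e.
  - have := tmin u (introT eqP e). by rewrite leqNgt h2.
  - have : Q u by rewrite /Q h2 e eqxx.
    move/t'max. by rewrite leqNgt h1.
have valS u : t' < u <= t -> phi (w u) = k.
  elim: u => [//|u IH] /andP [h1 h2].
  case: (ltnP t' u) => h3.
    have <- : phi (w u) = k by apply: IH; rewrite h3 ltnW.
    by apply: mid; rewrite h3 h2.
  have e : u = t' by apply/eqP; rewrite eqn_leq h3 -ltnS h1.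
  by rewrite e.
pose S := [pred c : 'I_m | [exists u : 'I_m, (t' < u <= t) && (c == w u)]].
have Sa c : c \in S -> phi c = k.
  by move=> /existsP [u /andP [hu /eqP ->]]; exact: valS.
have Sb c : c \in S -> ordS c \notin S -> phi (ordS c) = ordS k.
  move=> /existsP [u /andP [hu /eqP ->]] hn. case/andP: hu => h1 h2.
  case: (ltnP u t) => h3.
    exfalso; move/negP: hn; apply; apply/existsP.
    exists (Ordinal (leq_ltn_trans h3 tm)). by rewrite /= h3 ltnW //= eqxx.
  have eut : nat_of_ord u = t by apply/eqP; rewrite eqn_leq h2 h3.
  by rewrite eut (eqP Pt) valS // t't leqnn.
have Sc c : c \notin S -> ordS c \in S -> phi c = ordS k.
  move=> hn /existsP [[u hu] /andP [/andP [h1 h2] /eqP e]].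
  move: hu h1 h2 e. case: u => [//|v] hv h1 h2 /= e.
  have ec : c = w v := ordS_inj e.
  case: (ltnP t' v) => h3.
    exfalso; move/negP: hn; apply; apply/existsP.
    exists (Ordinal (ltnW hv)). by rewrite /= h3 ltnW //= ec eqxx.
  have ev : v = t' by apply/eqP; rewrite eqn_leq h3 -ltnS h1.
  have hk : phi (ordS (w t')) = k by [].
  by rewrite ec ev; rewrite hk in dect'; rewrite dect' ord_predK.
pose phi' := [ffun c => if c \in S then ordS (phi c) else phi c].
have hom' : is_hom C D phi'.
  move=> u v huv; rewrite !ffunE.
  case: (Crel _ _ huv) => e; subst.
  - by case: ifP => _; apply: Dref.
  - case: (boolP (u \in S)) => hu; case: (boolP (ordS u \in S)) => hv.
    + by rewrite (Sa _ hu) (Sa _ hv).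
    + by rewrite (Sa _ hu) (Sb _ hu hv).
    + by rewrite (Sc _ hu hv) (Sa _ hv).
    + exact: hphi.
  - case: (boolP (v \in S)) => hu; case: (boolP (ordS v \in S)) => hv.
    + by rewrite (Sa _ hu) (Sa _ hv).
    + by rewrite (Sa _ hu) (Sb _ hu hv).
    + by rewrite (Sc _ hu hv) (Sa _ hv).
    + exact: hphi.
have Dk := HDe k.
exists phi'; split; first split => //.
- case/orP: Dk => hk; [left|right] => u v huv; rewrite !ffunE;
  (case: (Crel _ _ huv) => e; subst;
  [ by case: ifP => h; rewrite ?(Sa _ h) //; apply: Dref
  | case: (boolP (u \in S)) => hu; case: (boolP (ordS u \in S)) => hv
  | case: (boolP (v \in S)) => hu; case: (boolP (ordS v \in S)) => hv ]);
  try rewrite (Sb _ hu hv); try rewrite (Sc _ hu hv);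
  try rewrite (Sa _ hu); try rewrite (Sa _ hv);
  first [done | apply: Dref | apply: hphi; done].
- move=> c; rewrite ffunE. by case: ifP => //; rewrite eqxx.
- apply: proper_card. apply/properP; split.
  + apply/subsetP => i; rewrite !inE; apply: contraNN => /eqP e; rewrite !ffunE.
    case: (boolP (i \in S)) => hu; case: (boolP (ordS i \in S)) => hv.
    * by rewrite e.
    * by move: e; rewrite (Sb _ hu hv) (Sa _ hu) => e; rewrite e eqxx in Dk *; have := ordS_neq k; rewrite e eqxx.
    * by move: e; rewrite (Sc _ hu hv) (Sa _ hv) => e; have := ordS_neq k; rewrite e eqxx.
    * by rewrite e.
  + have xnS : w t' \notin S.
      apply/existsP => [[u /andP [/andP [h1 h2] /eqP e]]].
      have t'm : t' < m := leq_ltn_trans (ltnW t't) tm.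
      have := w_inj _ _ t'm (ltn_ord u) e => e'. by rewrite e' ltnn in h1.
    have xS : ordS (w t') \in S.
      apply/existsP; exists (Ordinal (leq_ltn_trans t't tm)).
      by rewrite /= ltnSn t't eqxx.
    exists (w t'); rewrite !inE.
    * by rewrite dect' ord_pred_neq.
    * rewrite !ffunE xS (negbTE xnS) (Sa _ xS) (Sc _ xnS xS). by rewrite negbK.
Qed.

End Pf.

Theorem corollary2p3 (m n : nat) (C : rel 'I_m) (D : rel 'I_n) :
  refl_digraph_cycle C -> refl_digraph_cycle D -> non_contractible D ->
  forall phi : {ffun 'I_m -> 'I_n}, is_hom C D phi ->
  exists s : seq {ffun 'I_m -> 'I_n},
    up_path C D phi s /\ monotone (last phi s).
Proof.
move=> HC HD _ phi.
have [N le] := ubnP (@cnt m n phi).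
elim: N phi le => // N IH phi le hphi.
case: (classic (monotone phi)) => hm.
  by exists [::].
have [phi' [hup hlt]] := @raise m n C D HC HD phi hphi hm.
have hphi' : is_hom C D phi' by case: hup.
have [s [hs hms]] := IH phi' (leq_trans hlt le) hphi'.
by exists (phi' :: s).
Qed.
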